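(* Let $m>3$ be such that a Steiner triple system $\mathrm{STS}(\mathcal M)$ on $\mathcal M$ exists. Then the hypergraph PIN model on $\mathcal H_{\mathrm{STS}}=(\mathcal M,\mathrm{STS}(\mathcal M))$ is strict Type $\mathcal S$.
   Context: Let $\mathcal M=\{1,\dots,m\}$. A Steiner triple system $\mathrm{STS}(\mathcal M)$ is a collection of 3-element subsets of $\mathcal M$ such that every 2-element subset of $\mathcal M$ is contained in exactly one member of the collection. A hypergraph PIN model on $\mathcal H=(\mathcal M,\mathcal E)$ is defined as follows. Let $\mathcal E^{(n)}$ contain $n$ copies of each hyperedge. Independent Bernoulli(1/2) variables $\xi_e$ are attached to the $e\in\mathcal E^{(n)}$, and $X^n_i=(\xi_e:e\in\mathcal E^{(n)},\ i\in e)$; the single-letter source $X_{\mathcal M}$ is the case $n=1$. Entropies are base 2. $\Delta(\mathcal P)=\frac1{|\mathcal P|-1}[\sum_{A\in\mathcal P}H(X_A)-H(X_{\mathcal M})]$ for partitions with at least 2 cells, where $X_A=(X_i:i\in A)$. The source is strict Type $\mathcal S$ if the singleton partition $\{\{1\},\dots,\{m\}\}$ is the unique minimizer of $\Delta$. *)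

(* Defs.v *)
From mathcomp Require Import all_boot.
From Stdlib Require Import Reals.
Set Implicit Arguments. Unset Strict Implicit. Unset Printing Implicit Defensive.

Definition is_STS (m : nat) (S : {set {set 'I_m}}) : Prop :=
  (forall B, B \in S -> #|B| = 3) /\
  (forall x y : 'I_m, x != y -> #|[set B in S | (x \in B) && (y \in B)]| = 1).

Definition edge_t (m : nat) (E : {set {set 'I_m}}) := {e : {set 'I_m} | e \in E}.

(* Sample space of the single-letter (n = 1) PIN source: one bit xi_e per
   hyperedge; the xi_e are i.i.d. Bernoulli(1/2), i.e. the uniform
   distribution on this finite type. *)
Definition omega (m : nat) (E : {set {set 'I_m}}) := {ffun edge_t E -> bool}.

(* X_A = (X_i : i in A), X_i = (xi_e : i in e), encoded as the finite function
   (i, e) |-> xi_e if i \in A and i \in e, and false (a fixed filler) otherwise. *)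
Definition X_A (m : nat) (E : {set {set 'I_m}}) (A : {set 'I_m}) (w : omega E)
  : {ffun 'I_m * edge_t E -> bool} :=
  [ffun ie : 'I_m * edge_t E =>
     if (ie.1 \in A) && (ie.1 \in val ie.2) then w ie.2 else false].

Local Open Scope R_scope.

Definition log2 (x : R) : R := ln x / ln 2.

Definition prob_uniform (Om T : finType) (f : Om -> T) (t : T) : R :=
  INR #|[set w : Om | f w == t]| / INR #|Om|.

Definition entropy (Om T : finType) (f : Om -> T) : R :=
  - \big[Rplus/0]_(t : T)
      (if Req_EM_T (prob_uniform f t) 0 then 0
       else prob_uniform f t * log2 (prob_uniform f t)).

Definition H_PIN (m : nat) (E : {set {set 'I_m}}) (A : {set 'I_m}) : R :=
  entropy (X_A (E := E) A).

Definition Delta (m : nat) (E : {set {set 'I_m}}) (P : {set {set 'I_m}}) : R :=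
  (\big[Rplus/0]_(A in P) H_PIN E A - H_PIN E [set: 'I_m])
    / (INR #|P| - 1).

Definition admissible (m : nat) (P : {set {set 'I_m}}) : Prop :=
  partition P [set: 'I_m] /\ (2 <= #|P|)%nat.

Definition singleton_partition (m : nat) : {set {set 'I_m}} :=
  [set [set i] | i : 'I_m].

Definition strict_typeS (m : nat) (E : {set {set 'I_m}}) : Prop :=
  admissible (singleton_partition m) /\
  forall P : {set {set 'I_m}}, admissible P -> P <> singleton_partition m ->
    Delta E (singleton_partition m) < Delta E P.

(* Main.v *)
Require Import Defs.
From mathcomp Require Import all_boot.
From Stdlib Require Import Reals.
From HB Require Import structures.
From Stdlib Require Import Lra Lia ZArith.
From mathcomp Require Import ssrnat ssrbool eqtype seq fintype finset bigop finfun.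
From mathcomp Require Import zify.
Set Implicit Arguments. Unset Strict Implicit. Unset Printing Implicit Defensive.

Lemma arithZ (j k n T S2 : Z) :
  (1 <= j -> 2 <= k -> 4 <= j + k ->
  6*n = (j+k)*(j+k-1) -> 10*n <= 4*T + S2 -> 6*n <= 2*T + S2 -> S2 <= j*(j+1) ->
  3*n + (j+k)*(k-1) < 3*T)%Z.
Proof.
intros. destruct (Z_lt_ge_dec (3*(j+1)) (2*(j+k))).
- assert (0 < j*(2*(j+k) - 3*(j+1)))%Z by (apply Z.mul_pos_pos; lia).
  lia.
- assert (0 <= (3*j+3-2*(j+k))*(k-2))%Z by (apply Z.mul_nonneg_nonneg; lia).
  assert (0 <= (k-1)*(k-2))%Z by (apply Z.mul_nonneg_nonneg; lia).
  assert (0 <= k*(j-(2*k-3)))%Z by (apply Z.mul_nonneg_nonneg; lia).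
  assert (k = 2 \/ 3 <= k)%Z as [->|Hk] by lia.
  + lia.
  + assert (0 < (k-1)*(k-2))%Z by (apply Z.mul_pos_pos; lia). lia.
Qed.

Lemma arith_nat m k n T S2 :
  6 * n = m * m.-1 -> 10 * n <= 4 * T + S2 -> 6 * n <= 2 * T + S2 ->
  S2 <= (m - k) * (m - k).+1 -> 2 <= k -> k < m -> 3 < m ->
  3 * n + m * k < 3 * T + m.
Proof.
move=> H6 Ha Hb Hs Hk Hkm Hm.
have [j Hj] : exists j, m = j + k by exists (m - k); lia.
subst m.
have Hjk : j + k - k = j by lia.
rewrite Hjk in Hs.
have H6' : 6 * n + (j + k) = (j + k) * (j + k).
  move: H6; case: (j + k) => [|c] //= ->; nia.
have := @arithZ (Z.of_nat j) (Z.of_nat k) (Z.of_nat n) (Z.of_nat T) (Z.of_nat S2).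
lia.
Qed.

Definition deg (m : nat) (E : {set {set 'I_m}}) (A : {set 'I_m}) : nat :=
  #|[set e in E | [exists i in A, i \in e]]|.


HB.instance Definition _ := Monoid.isComLaw.Build R 0%R Rplus (fun a b c => esym (Rplus_assoc a b c)) Rplus_comm Rplus_0_l.



Local Open Scope R_scope.

Lemma big_INR (I : finType) (P : pred I) (f : I -> nat) :
  \big[Rplus/0]_(i | P i) INR (f i) = INR (\sum_(i | P i) f i).
Proof.
by rewrite (big_morph INR plus_INR (erefl (INR 0))).
Qed.

Lemma big_const_R (I : finType) (P : pred I) (c : R) :
  \big[Rplus/0]_(i | P i) c = INR #|P| * c.
Proof.
rewrite big_const; elim: #|P| => [|n IH]; first by rewrite /=; lra.
have -> : iter n.+1 (Rplus c) 0 = c + iter n (Rplus c) 0 by [].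
rewrite IH (S_INR n); lra.
Qed.

Lemma card_fibers (Om T : finType) (f : Om -> T) :
  #|Om| = (\sum_(t : T) #|[set w | f w == t]|)%N.
Proof.
rewrite -sum1_card (partition_big f xpredT) //.
apply: eq_bigr => t _; rewrite -sum1_card; apply: eq_bigl => w.
by rewrite inE.
Qed.

Lemma card_const_fiber (Om T : finType) (f : Om -> T) (K : nat) :
  (0 < K)%N ->
  (forall w, #|[set w' | f w' == f w]| = K) ->
  #|Om| = (#|[set t | [exists w, f w == t]]| * K)%N.
Proof.
move=> K0 HK.
set I := [set t | [exists w, f w == t]].
have fib : forall t, #|[set w | f w == t]| = if t \in I then K else 0%N.
  move=> t; rewrite inE; case: existsP => [[w /eqP <-]|nE].
    by rewrite HK.
  apply/eqP; rewrite cards_eq0; apply/eqP/setP => w; rewrite !inE.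
  by apply/negP => Hw; apply: nE; exists w.
rewrite (card_fibers f) (eq_bigr _ (fun t _ => fib t)) -big_mkcond /=.
by rewrite sum_nat_const.
Qed.

Lemma entropy_const_fiber (Om T : finType) (f : Om -> T) (K : nat) :
  (0 < K)%N -> (0 < #|Om|)%N ->
  (forall w, #|[set w' | f w' == f w]| = K) ->
  entropy f = log2 (INR #|[set t | [exists w, f w == t]]|).
Proof.
move=> K0 Om0 HK.
set I := [set t | [exists w, f w == t]].
have fib : forall t, #|[set w | f w == t]| = if t \in I then K else 0%N.
  move=> t; rewrite inE; case: existsP => [[w /eqP <-]|nE].
    by rewrite HK.
  apply/eqP; rewrite cards_eq0; apply/eqP/setP => w; rewrite !inE.
  by apply/negP => Hw; apply: nE; exists w.
have cardOm : #|Om| = (#|I| * K)%N.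
  rewrite (card_fibers f) (eq_bigr _ (fun t _ => fib t)) -big_mkcond /=.
  by rewrite sum_nat_const.
have I0 : (0 < #|I|)%N by move: Om0; rewrite cardOm muln_gt0 => /andP[].
have IR : 0 < INR #|I| by apply: lt_0_INR; apply/ltP.
have KR : 0 < INR K by apply: lt_0_INR; apply/ltP.
have pu : forall t, prob_uniform f t = if t \in I then / INR #|I| else 0.
  move=> t; rewrite /prob_uniform fib cardOm mult_INR.
  case: ifP => _; last by rewrite /Rdiv Rmult_0_l.
  move: IR KR; generalize (INR K) (INR #|I|) => a b Ha Hb. field; lra.
rewrite /entropy.
rewrite (eq_bigr (fun t => if t \in I then / INR #|I| * log2 (/ INR #|I|) else 0)); last first.
  move=> t _; rewrite pu; case: (t \in I); case: Req_EM_T => //.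
  move=> H; exfalso; have := Rinv_neq_0_compat _ (Rgt_not_eq _ _ IR); lra.
rewrite -big_mkcond big_const_R /log2 ln_Rinv //.
have l2 := ln_lt_2.
have -> : #|[in I]| = #|I| by apply: eq_card.
field; lra.
Qed.

Local Close Scope R_scope.
HB.instance Definition _ (m : nat) (E : {set {set 'I_m}}) := Finite.on (edge_t E).

Section PIN.
Variables (m : nat) (E : {set {set 'I_m}}) (A : {set 'I_m}).

Definition Dset : {set edge_t E} := [set e : edge_t E | [exists i in A, i \in val e]].

Lemma XA_eq (w w' : omega E) :
  (X_A A w == X_A A w') = [forall e in Dset, w e == w' e].
Proof.
apply/eqP/forall_inP => [H e | H].
  rewrite inE => /exists_inP [i iA ie].
  move/ffunP: H => /(_ (i, e)); rewrite !ffunE /= iA ie /= => ->; done.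
apply/ffunP => [[i e]]; rewrite !ffunE /=.
case iA: (i \in A); case ie: (i \in val e) => //=.
apply/eqP; apply: H; rewrite inE; apply/exists_inP; exists i => //.
Qed.

Lemma fiber_card (w : omega E) :
  #|[set w' | X_A A w' == X_A A w]| = 2 ^ #|~: Dset|.
Proof.
pose h := fun u : omega E => [ffun e => u e (+) w e].
have hinj : injective h.
  move=> u u' /ffunP H; apply/ffunP => e; move: (H e); rewrite !ffunE.
  by case: (u e) (u' e) (w e) => [] [] [].
set F0 := [set u : omega E | [forall e in Dset, u e == false]].
have -> : [set w' | X_A A w' == X_A A w] = h @: F0.
  apply/setP => v; rewrite inE XA_eq; apply/idP/imsetP.
    move=> /forall_inP Hv; exists (h v).
      rewrite inE; apply/forall_inP => e eD; rewrite ffunE (eqP (Hv e eD)).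
      by case: (w e).
    apply/ffunP => e; rewrite !ffunE; by case: (v e) (w e) => [] [].
  move=> [u uF ->]; apply/forall_inP => e eD; rewrite ffunE.
  move: uF; rewrite inE => /forall_inP /(_ e eD) /eqP ->; by [].
rewrite card_imset //.
have -> : #|F0| = #|pffun_on false (~: Dset) (@predT bool)|.
  apply: eq_card => u; rewrite inE; apply/forall_inP/pffun_onP.
    move=> H; split => //; apply/subsetP => e ue; rewrite in_setC.
    by apply: contraL ue => eD; rewrite inE negbK; apply: H.
  move=> [/subsetP H _] e eD; apply/eqP; apply/negbTE.
  apply: contraL eD => ue; have : e \in false.-support u by rewrite inE ue.
  by move=> /H; rewrite in_setC.
by rewrite card_pffun_on card_bool.
Qed.



Lemma card_Dset : #|Dset| = deg E A.
Proof.
rewrite /deg -(card_imset _ val_inj); apply: eq_card => e.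
apply/imsetP/idP.
  move=> [x]; rewrite inE => xD ->; rewrite inE (valP x) /=; exact: xD.
rewrite inE => /andP [eE eA]; exists (exist _ e eE) => //; rewrite inE; exact: eA.
Qed.

Lemma INR_expn (a d : nat) : INR (a ^ d) = (INR a ^ d)%R.
Proof. elim: d => [|d IH]; first by rewrite expn0. by rewrite expnS mult_INR IH. Qed.

Lemma H_PIN_deg : H_PIN E A = INR (deg E A).
Proof.
rewrite /H_PIN.
have K0 : (0 < 2 ^ #|~: Dset|)%N by rewrite expn_gt0.
have Om0 : (0 < #|omega E|)%N by rewrite card_ffun card_bool expn_gt0.
have HK := fiber_card.
rewrite (entropy_const_fiber K0 Om0 HK).
have := card_const_fiber K0 HK; rewrite card_ffun card_bool.
rewrite -(cardsC Dset) expnD => /eqP; rewrite eqn_pmul2r // => /eqP <-.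
rewrite card_Dset INR_expn /log2 ln_pow; last by simpl; lra.
have l2 := ln_lt_2. rewrite (_ : INR 2 = 2%R); last by rewrite /=; lra.
field; lra.
Qed.

End PIN.

Lemma card_sum (T : finType) (A : {pred T}) (b : T -> bool) :
  \sum_(x in A) (b x : nat) = #|[set x in A | b x]|.
Proof.
rewrite -sum1_card.
rewrite [RHS](eq_bigl (fun x => (x \in A) && b x)); last by move=> x; rewrite inE.
rewrite big_mkcondr /=.
by apply: eq_bigr => x _; case: (b x).
Qed.

Lemma local_a (I : finType) (Q : pred I) (t : I -> nat) :
  \sum_(i | Q i) t i = 3 -> 10 <= \sum_(i | Q i) (4 * (0 < t i) + t i * (t i).-1).
Proof.
move=> H3.
have Hodd : 0 < \sum_(i | Q i) odd (t i).
  have : (\sum_(i | Q i) t i) %% 2 = (\sum_(i | Q i) odd (t i)) %% 2.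
    rewrite -modn_summ; congr (_ %% 2); apply: eq_bigr => i _; exact: modn2.
  rewrite H3; case: (\sum_(i | Q i) odd (t i)) => //.
have : \sum_(i | Q i) (3 * t i + odd (t i)) <= \sum_(i | Q i) (4 * (0 < t i) + t i * (t i).-1).
  apply: leq_sum => i _; case: (t i) => [|[|[|c]]] //=.
  case: (odd c) => /=; nia.
rewrite big_split /= -big_distrr /= H3; lia.
Qed.

Lemma local_b (I : finType) (Q : pred I) (t : I -> nat) :
  \sum_(i | Q i) t i = 3 -> 6 <= \sum_(i | Q i) (2 * (0 < t i) + t i * (t i).-1).
Proof.
move=> H3.
have : \sum_(i | Q i) (2 * t i) <= \sum_(i | Q i) (2 * (0 < t i) + t i * (t i).-1).
  apply: leq_sum => i _; case: (t i) => [|c] //=; nia.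
rewrite -big_distrr /= H3; lia.
Qed.

Section Comb.
Variables (m : nat) (S : {set {set 'I_m}}).

Definition Pairs (X : {set 'I_m}) : {set 'I_m * 'I_m} :=
  [set p | [&& p.1 \in X, p.2 \in X & p.1 != p.2]].

Lemma card_Pairs X : #|Pairs X| = #|X| * #|X|.-1.
Proof.
have := cardsID [set p : 'I_m * 'I_m | p.1 == p.2] (setX X X).
rewrite cardsX.
have -> : setX X X :&: [set p | p.1 == p.2] = (fun x => (x, x)) @: X.
  apply/setP => [[x y]]; rewrite !inE /=; apply/idP/imsetP.
    by move=> /andP [/andP [xX yX] /eqP <-]; exists x.
  by move=> [z zX [-> ->]]; rewrite zX eqxx.
have -> : setX X X :\: [set p | p.1 == p.2] = Pairs X.
  by apply/setP => [[x y]]; rewrite !inE /= andbC andbA.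
rewrite card_imset; last by move=> x y [].
by move=> H; rewrite -subn1 mulnBr muln1 -H addKn.
Qed.

Lemma pair_count (HS : is_STS S) X :
  \sum_(e in S) #|X :&: e| * #|X :&: e|.-1 = #|X| * #|X|.-1.
Proof.
transitivity (\sum_(e in S) \sum_(p in Pairs X) ((p.1 \in e) && (p.2 \in e) : nat)).
  apply: eq_bigr => e _; rewrite -card_Pairs card_sum; apply: eq_card => p.
  rewrite !inE; by case: (p.1 \in X) (p.2 \in X) (p.1 \in e) (p.2 \in e) (p.1 != p.2) => [] [] [] [] [].
rewrite exchange_big /= -card_Pairs -sum1_card; apply: eq_bigr => p.
rewrite inE => /and3P [_ _ ne]; rewrite card_sum.
by case: HS => _ /(_ _ _ ne).
Qed.

Variable P : {set {set 'I_m}}.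
Hypothesis HP : partition P [set: 'I_m].

Lemma in_one_block i : #|[set A in P | i \in A]| = 1.
Proof.
case/and3P: HP => /eqP cov triv _.
have ic : i \in cover P by rewrite cov inE.
have -> : [set A in P | i \in A] = [set pblock P i].
  apply/setP => A; rewrite !inE; apply/andP/eqP.
    by move=> [AP iA]; rewrite (def_pblock triv AP iA).
  by move=> ->; rewrite pblock_mem // mem_pblock.
by rewrite cards1.
Qed.

Lemma part_sum X : \sum_(A in P) #|A :&: X| = #|X|.
Proof.
transitivity (\sum_(A in P) \sum_(i in X) (i \in A : nat)).
  by apply: eq_bigr => A _; rewrite card_sum; apply: eq_card => i; rewrite !inE andbC.
rewrite exchange_big /= -sum1_card; apply: eq_bigr => i _.
by rewrite card_sum in_one_block.
Qed.

Lemma part_card : \sum_(A in P) #|A| = m.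
Proof. by rewrite -(card_partition HP) cardsT card_ord. Qed.

Lemma part_nonempty A : A \in P -> 0 < #|A|.
Proof.
case/and3P: HP => _ _ nP AP; rewrite card_gt0; apply: contraNneq nP => <-; exact: AP.
Qed.

Lemma part_pred : \sum_(A in P) (#|A|).-1 = m - #|P|.
Proof.
have : \sum_(A in P) (#|A|).-1 + \sum_(A in P) 1 = m.
  rewrite -big_split /=; rewrite -[X in _ = X]part_card; apply: eq_bigr => A AP.
  by rewrite addn1 prednK // part_nonempty.
rewrite sum1_card; lia.
Qed.

Lemma part_le : #|P| <= m.
Proof.
have : \sum_(A in P) (#|A|).-1 + \sum_(A in P) 1 = m.
  rewrite -big_split /=; rewrite -[X in _ = X]part_card; apply: eq_bigr => A AP.
  by rewrite addn1 prednK // part_nonempty.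
rewrite sum1_card; lia.
Qed.

Lemma part_S2 : \sum_(A in P) #|A| * #|A|.-1 <= (m - #|P|) * (m - #|P|).+1.
Proof.
rewrite -part_pred big_distrl /=.
apply: leq_sum => A AP; rewrite mulnC leq_mul2l.
apply/orP; right.
have := part_nonempty AP; rewrite (bigD1 A) //=.
case: #|A| => // c _ /=; rewrite ltnS; exact: leq_addr.
Qed.

Lemma part_eq_m : #|P| = m -> P = singleton_partition m.
Proof.
move=> Pm.
have H0 : \sum_(A in P) (#|A|).-1 == 0 by rewrite part_pred Pm subnn.
move: H0; rewrite sum_nat_eq0 => /forall_inP H1.
apply/eqP; rewrite eqEcard; apply/andP; split.
  apply/subsetP => A AP; have := H1 A AP; have := part_nonempty AP.
  move=> h0 /eqP h1; have /cards1P [x ->] : #|A| == 1 by apply/eqP; lia.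
  by apply/imsetP; exists x.
by rewrite card_imset ?card_ord ?Pm //; exact: set1_inj.
Qed.

End Comb.

Lemma exists_card (m : nat) (A e : {set 'I_m}) :
  [exists i in A, i \in e] = (0 < #|A :&: e|).
Proof.
rewrite card_gt0; apply/exists_inP/set0Pn => [[i iA ie]|[i]].
  by exists i; rewrite inE iA.
by rewrite inE => /andP [iA ie]; exists i.
Qed.

Lemma deg_sum (m : nat) (S P : {set {set 'I_m}}) :
  \sum_(A in P) deg S A = \sum_(e in S) \sum_(A in P) (0 < #|A :&: e|).
Proof.
rewrite exchange_big /=; apply: eq_bigr => A _.
rewrite /deg -card_sum; apply: eq_bigr => e _; by rewrite exists_card.
Qed.

Section Comb2.
Variables (m : nat) (S P : {set {set 'I_m}}).
Hypothesis HS : is_STS S.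
Hypothesis HP : partition P [set: 'I_m].

Lemma S2_exchange :
  \sum_(A in P) #|A| * #|A|.-1 = \sum_(e in S) \sum_(A in P) #|A :&: e| * #|A :&: e|.-1.
Proof.
rewrite exchange_big /=; apply: eq_bigr => A _; by rewrite pair_count.
Qed.

Lemma edge3 e : e \in S -> \sum_(A in P) #|A :&: e| = 3.
Proof. by move=> eS; rewrite part_sum //; case: HS => H _; exact: H. Qed.

Lemma ineq_a :
  10 * #|S| <= 4 * \sum_(A in P) deg S A + \sum_(A in P) #|A| * #|A|.-1.
Proof.
rewrite S2_exchange deg_sum big_distrr -big_split /= -sum1_card big_distrr /=.
apply: leq_sum => e eS; rewrite muln1 big_distrr -big_split /=.
exact: local_a (edge3 eS).
Qed.

Lemma ineq_b :
  6 * #|S| <= 2 * \sum_(A in P) deg S A + \sum_(A in P) #|A| * #|A|.-1.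
Proof.
rewrite S2_exchange deg_sum big_distrr -big_split /= -sum1_card big_distrr /=.
apply: leq_sum => e eS; rewrite muln1 big_distrr -big_split /=.
exact: local_b (edge3 eS).
Qed.

End Comb2.

Lemma STS_count (m : nat) (S : {set {set 'I_m}}) :
  is_STS S -> 6 * #|S| = m * m.-1.
Proof.
move=> HS; have := pair_count HS [set: 'I_m].
rewrite cardsT card_ord => <-.
rewrite -sum1_card big_distrr /=; apply: eq_bigr => e eS.
by rewrite setTI; case: HS => H _; rewrite H.
Qed.

Lemma deg_T (m : nat) (S : {set {set 'I_m}}) :
  is_STS S -> deg S [set: 'I_m] = #|S|.
Proof.
move=> [H _]; rewrite /deg; apply: eq_card => e; rewrite !inE.
case eS: (e \in S) => //=; rewrite exists_card setTI (H _ eS) //.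
Qed.

Lemma sing_partition (m : nat) : partition (singleton_partition m) [set: 'I_m].
Proof.
apply/and3P; split.
- apply/eqP/setP => i; rewrite inE; apply/bigcupP; exists [set i].
    by apply/imsetP; exists i.
  by rewrite inE.
- apply/trivIsetP => A B /imsetP [i _ ->] /imsetP [j _ ->] ne.
  rewrite disjoints1 inE; apply: contra ne => /eqP ->; by [].
- apply/imsetP => [[i _ H]]; have : i \in [set i] by rewrite inE.
  by rewrite -H inE.
Qed.

Lemma card_sing (m : nat) : #|singleton_partition m| = m.
Proof. by rewrite card_imset ?card_ord //; exact: set1_inj. Qed.

Lemma sing_T (m : nat) (S : {set {set 'I_m}}) :
  is_STS S -> \sum_(A in singleton_partition m) deg S A = 3 * #|S|.
Proof.
move=> HS; rewrite deg_sum -sum1_card big_distrr /=; apply: eq_bigr => e eS.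
rewrite muln1 -(edge3 HS (sing_partition m) eS); apply: eq_bigr => A /imsetP [i _ ->].
have : #|[set i] :&: e| <= 1 by rewrite -(cards1 i); apply: subset_leq_card; exact: subsetIl.
by case: #|_| => [|[|]].
Qed.

Lemma six (m n : nat) : (3 < m)%N -> (6 * n = m * m.-1)%N -> (6 * n + m = m * m)%N.
Proof. case: m => [|c] //= _ ->; nia. Qed.

Lemma sum_H (m : nat) (S P : {set {set 'I_m}}) :
  \big[Rplus/0%R]_(A in P) H_PIN S A = INR (\sum_(A in P) deg S A).
Proof. rewrite -big_INR; apply: eq_bigr => A _; exact: H_PIN_deg. Qed.

Lemma INR_muln (a b : nat) : INR (a * b) = (INR a * INR b)%R.
Proof. exact: mult_INR. Qed.
Lemma INR_addn (a b : nat) : INR (a + b) = (INR a + INR b)%R.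
Proof. exact: plus_INR. Qed.

Lemma real_final (a M K t : R) :
  (3*a + M*K < 3*t + M)%R -> (6*a + M = M*M)%R -> (2 <= K)%R -> (4 <= M)%R ->
  ((3*a - a)/(M-1) < (t - a)/(K-1))%R.
Proof.
move=> key H6 Km M4.
have -> : ((3 * a - a) / (M - 1) = M / 3)%R.
  field_simplify_eq; [nra | lra].
apply (Rmult_lt_reg_r (3 * (K - 1))); first lra.
rewrite (_ : (M / 3 * (3 * (K - 1)) = M * (K - 1))%R); last by field.
rewrite (_ : ((t - a) / (K - 1) * (3 * (K - 1)) = 3 * (t - a))%R); last by field; lra.
nra.
Qed.

Theorem corollary5 (m : nat) (S : {set {set 'I_m}}) :
  (3 < m)%nat -> is_STS S -> strict_typeS S.
Proof.
move=> m3 HS; split.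
  split; first exact: sing_partition.
  by rewrite card_sing; lia.
move=> P [HP k2] Pne.
have km : (#|P| < m)%N.
  rewrite ltn_neqAle part_le // andbT; apply/eqP => E; apply: Pne; exact: part_eq_m.
have key := arith_nat (STS_count HS) (ineq_a HS HP) (ineq_b HS HP) (part_S2 HP) k2 km m3.
have H6 : (6 * #|S| + m = m * m)%N.
  exact: six m3 (STS_count HS).
rewrite /Defs.Delta.

rewrite !sum_H H_PIN_deg deg_T // sing_T // card_sing.
rewrite INR_muln (_ : INR 3 = 3%R); last by rewrite /=; lra.
apply: real_final.
- have h3 : INR 3 = 3%R by simpl; lra.
  move/ltP/lt_INR: key; rewrite !INR_addn !INR_muln ?h3; lra.
- have h6 : INR 6 = 6%R by simpl; lra.
  move/(f_equal INR): H6; rewrite !INR_addn !INR_muln ?h6 ?INR_0. lra.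
- rewrite (_ : 2%R = INR 2); last by simpl; lra.
  by apply: le_INR; apply/leP.
- rewrite (_ : 4%R = INR 4); last by simpl; lra.
  by apply: le_INR; apply/leP.
Qed.
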